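(* Under the hypotheses of Theorem 5.1 (odd composition ${\underline{\kappa}}$, $p\ge1$, partition $\Pi=(I_0,I^0_1,I^1_1,\dots,I^0_p,I^1_p)$ of $\{1,\dots,n\}$ into nonempty sets except that $I_0=\emptyset$ is allowed when $\ell({\underline{\kappa}})\ge3$, wall $W_\Pi=\{\sum_{i\in I^0_s}b_i=\sum_{j\in I^1_s}b_j,\ s=1..p\}$), let $G\in\mathcal{RG}^{{\underline{\kappa}},*}_{g,n}$ and let $e\in S(G)$ be a static edge whose forced weight $f_e$ vanishes identically on $W_\Pi$. Then $e$ is a bridge of $G$.
   Context: $\mathcal{RG}^{{\underline{\kappa}},*}_{g,n}$: connected ribbon graphs (cyclically ordered half-edges at vertices) of genus $g$ with $n$ labeled vertices and faces of odd degrees ${\underline{\kappa}}$. An edge $e$ is static if some connected component of $G-e$ is bipartite. For static $e$ with $I,J\subset\{1..n\}$ the labels of the two color classes of the bipartite component of $G-e$ ($e$ attached to class $I$), the forced weight is $f_e(\underline b)=\sum_{I}b_i-\sum_J b_j$ if $e$ is a bridge and $\tfrac12(\sum_Ib_i-\sum_Jb_j)$ otherwise; it equals $w(e)$ for any weight function $w$ with vertex perimeters $\underline b$. *)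

(* Defs.v *)
From mathcomp Require Import all_boot all_order all_fingroup all_algebra.
Set Warnings "-notation-overridden,-ambiguous-paths".
Set Implicit Arguments.
Unset Strict Implicit.
Unset Printing Implicit Defensive.
Import GRing.Theory Num.Theory.

(* A ribbon graph is encoded by a finite set of half-edges [H], a vertex
   rotation [sigma] (cycles = vertices, with cyclic order of half-edges), and a
   fixed-point-free involution [alpha] (orbits = edges).  Faces are the cycles
   of the face permutation sigma o alpha (in mathcomp, [(alpha * sigma)%g x =
   sigma (alpha x)]); the degree of a face is the length of its cycle.
   Vertices are labelled by [lab : H -> 'I_n]: half-edges get the same label iff
   they lie in the same sigma-cycle, and every label is used. *)

Section RibbonGraphs.
Variables (n : nat) (H : finType).

Definition face_perm (sigma alpha : {perm H}) : {perm H} := (alpha * sigma)%g.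

Definition face_degrees (sigma alpha : {perm H}) : seq nat :=
  map (fun O : {set H} => #|O|) (enum (porbits (face_perm sigma alpha))).

Definition hstep (sigma alpha : {perm H}) : rel H :=
  fun x y => (y == sigma x) || (y == alpha x).

Definition in_RG (kappa : seq nat) (g : nat) (sigma alpha : {perm H})
    (lab : H -> 'I_n) : Prop :=
  [/\ forall x, alpha (alpha x) = x /\ alpha x != x,
      (forall x y, (lab x == lab y) = (y \in porbit sigma x)) /\
      (forall v : 'I_n, exists x, lab x = v),
      forall x y, connect (hstep sigma alpha) x y,
      perm_eq (face_degrees sigma alpha) kappa &
      (n + #|porbits (face_perm sigma alpha)| + 2 * g = 2 + #|H| %/ 2)%N ].

(* Adjacency of (labelled) vertices in G - e, where e = {h, alpha h}. *)
Definition adj_minus (alpha : {perm H}) (lab : H -> 'I_n) (h : H) : rel 'I_n :=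
  fun u v => [exists x, [&& x != h, x != alpha h, lab x == u & lab (alpha x) == v]].

Definition is_bridge (alpha : {perm H}) (lab : H -> 'I_n) (h : H) : bool :=
  [exists u : 'I_n, exists v : 'I_n, ~~ connect (adj_minus alpha lab h) u v].

(* I, J are the two colour classes of a bipartite connected component of
   G - e, and e is attached to the class I.  The existence of such I, J is
   precisely the statement that e is static. *)
Definition static_data (alpha : {perm H}) (lab : H -> 'I_n) (h : H)
    (I J : {set 'I_n}) : Prop :=
  [/\ exists u, I :|: J = [set v | connect (adj_minus alpha lab h) u v],
      [disjoint I & J],
      forall u v, adj_minus alpha lab h u v ->
        ~~ ((u \in I) && (v \in I)) && ~~ ((u \in J) && (v \in J)) &
      (lab h \in I) || (lab (alpha h) \in I) ].

Definition is_static (alpha : {perm H}) (lab : H -> 'I_n) (h : H) : Prop :=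
  exists I J, static_data alpha lab h I J.

Definition forced_weight (R : realFieldType) (alpha : {perm H})
    (lab : H -> 'I_n) (h : H) (I J : {set 'I_n}) (b : 'I_n -> R) : R :=
  let d := (\sum_(i in I) b i - \sum_(j in J) b j)%R in
  if is_bridge alpha lab h then d else (d / 2%:R)%R.

End RibbonGraphs.

(* The partition Pi = (I_0, I^0_1, I^1_1, ..., I^0_p, I^1_p) of {1..n};
   [Ib s false] = I^0_s, [Ib s true] = I^1_s. *)
Definition is_Pi_partition (n p : nat) (kappa : seq nat) (I0 : {set 'I_n})
    (Ib : 'I_p -> bool -> {set 'I_n}) : Prop :=
  [/\ forall v, v \in I0 \/ exists s c, v \in Ib s c,
      forall s c, [disjoint I0 & Ib s c],
      forall s c s' c', (s, c) != (s', c') -> [disjoint Ib s c & Ib s' c'],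
      forall s c, Ib s c != set0 &
      I0 != set0 \/ (3 <= size kappa)%N ].

Definition in_wall (R : realFieldType) (n p : nat)
    (Ib : 'I_p -> bool -> {set 'I_n}) (b : 'I_n -> R) : Prop :=
  forall s, (\sum_(i in Ib s false) b i = \sum_(j in Ib s true) b j)%R.

(* Main.v *)
Require Import Defs.
From mathcomp Require Import all_boot all_order all_fingroup all_algebra.
From mathcomp Require Import lra.
Import GRing.Theory Num.Theory.

Lemma orbit_even (H : finType) (s : {perm H}) (c : H -> bool) x :
  (forall y, y \in porbit s x -> c (s y) = ~~ c y) -> ~~ odd #|porbit s x|.
Proof.
move=> Hc.
have Hk : forall k, c (iter k s x) = c x (+) odd k.
  elim=> [|k IH] /=; first by rewrite addbF.
  rewrite Hc; last by rewrite -permX mem_porbit.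
  by rewrite IH; case: (c x); case: (odd k).
have := Hk #|porbit s x|; rewrite iter_porbit.
by case: (c x); case: (odd _).
Qed.

Theorem lemma5p3 (kappa : seq nat) (g n p : nat) (H : finType)
    (sigma alpha : {perm H}) (lab : H -> 'I_n)
    (I0 : {set 'I_n}) (Ib : 'I_p -> bool -> {set 'I_n})
    (R : realFieldType) (h : H) :
  all odd kappa ->
  (0 < p)%N ->
  is_Pi_partition kappa I0 Ib ->
  in_RG kappa g sigma alpha lab ->
  (exists I J : {set 'I_n}, static_data alpha lab h I J /\
     forall b : 'I_n -> R, in_wall Ib b ->
       forced_weight alpha lab h I J b = 0%R) ->
  is_bridge alpha lab h.
Proof.
move=> Hk Hp [Hcov Hdis0 Hdis Hne Hsz] [Halpha [Hlab Hsurj] Hconn Hperm Heul]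
  [I [J [[[u HU] HIJ Hbip Hatt] Hf]]].
apply: contraT => Hnb.
have Hc : forall a b', connect (adj_minus alpha lab h) a b'.
  move=> a b'; move: Hnb; rewrite /is_bridge negb_exists => /forallP /(_ a).
  by rewrite negb_exists => /forallP /(_ b'); rewrite negbK.
have Hall : forall v, v \in I :|: J by move=> v; rewrite HU inE Hc.
case: Hsz => [/set0Pn [v Hv] | H3].
  pose b := fun i : 'I_n => if i == v then 1%R else 0%R : R.
  have Hw : in_wall Ib b.
    move=> s; rewrite !big1 // => i Hi; rewrite /b; case: eqP => // ei; subst i.
      by rewrite (disjointFr (Hdis0 s true) Hv) in Hi.
    by rewrite (disjointFr (Hdis0 s false) Hv) in Hi.
  have := Hf b Hw; rewrite /forced_weight.
  have Hsum : forall A : {set 'I_n}, (\sum_(i in A) b i = (v \in A)%:R)%R.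
    move=> A; case vA: (v \in A).
      rewrite (bigD1 v) //= big1 => [|i /andP[_ /negbTE ni]]; last by rewrite /b ni.
      by rewrite /b eqxx addr0.
    rewrite big1 // => i iA; rewrite /b; case: eqP => // ei; subst i.
    by rewrite vA in iA.
  rewrite !Hsum.
  have Hone : (1%R : R) != 0%R by rewrite oner_eq0.
  have := Hall v; rewrite inE; case vI: (v \in I) => /= vJ.
    rewrite (disjointFr HIJ vI) /= => E; rewrite -(negbTE Hone).
    by apply/eqP; move: E; case: ifP => _; lra.
  have -> : (v \in J) = true by [].
  move=> E; rewrite -(negbTE Hone).
  by apply/eqP; move: E; rewrite (_ : (true%:R : R) = 1)%R //; case: ifP => _; lra.
pose c x := lab x \in I.
have Hsig : forall x, lab (sigma x) = lab x.
  move=> x; apply/eqP; rewrite eq_sym Hlab.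
  by have := mem_porbit sigma 1 x; rewrite expg1.
have Halt : forall x, x != h -> x != alpha h -> c (alpha x) = ~~ c x.
  move=> x Hx1 Hx2.
  have adj : adj_minus alpha lab h (lab x) (lab (alpha x)).
    by apply/existsP; exists x; rewrite Hx1 Hx2 !eqxx.
  have := Hbip _ _ adj; have := Hall (lab x); have := Hall (lab (alpha x)).
  rewrite !inE /c.
  by case: (lab x \in I); case: (lab x \in J); case: (lab (alpha x) \in I);
    case: (lab (alpha x) \in J).
pose phi := face_perm sigma alpha.
have Hface : forall x, x != h -> x != alpha h -> c (phi x) = ~~ c x.
  by move=> x H1 H2; rewrite /phi /face_perm permM /c Hsig; exact: Halt.
have Hmeet : forall x, (h \in porbit phi x) || (alpha h \in porbit phi x).
  move=> x; apply/negPn/negP; rewrite negb_or => /andP[n1 n2].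
  have : odd #|porbit phi x|.
    have : #|porbit phi x| \in face_degrees sigma alpha.
      by apply/mapP; exists (porbit phi x); rewrite ?mem_enum ?imset_f.
    by rewrite (perm_mem Hperm) => /(allP Hk).
  apply/negP; apply: orbit_even => y Hy; apply: Hface.
    by apply: (contraNneq _ n1) => <-.
  by apply: (contraNneq _ n2) => <-.
have Hcard : (#|porbits phi| <= 2)%N.
  apply: (@leq_trans #|[set porbit phi h; porbit phi (alpha h)]|).
    apply: subset_leq_card; apply/subsetP => O /imsetP [x _ ->].
    rewrite !inE !eq_porbit_mem !(porbit_sym _ x).
    exact: Hmeet.
  by rewrite cards2; case: (_ != _).
have : size kappa = #|porbits phi|.
  by rewrite -(perm_size Hperm) /face_degrees size_map -cardE.
move=> Hs; move: H3; rewrite Hs => H3.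
by have := leq_trans H3 Hcard.
Qed.
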